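(* Under the hypotheses: $N\ge M$, $d_i>0$ for all $i$, $\mathbf{P}\in\mathbb{Z}_{\ge0}^N$ with $P_N>0$, $\mathbf{L}\in\mathbb{R}^{N\times M}$ full rank with non-negative entries and $L_{N,j}>0$ for all $j$, let $\boldsymbol\alpha^{(0)}\in\mathbb{R}^M$ have all components strictly positive and define $\boldsymbol\alpha^{(n+1)}=\mathbf{T}(\boldsymbol\alpha^{(n)})$. If the sequence $(\boldsymbol\alpha^{(n)})$ converges, then its limit satisfies both KKT conditions ($\tilde\alpha_j\partial_jl(\tilde{\boldsymbol\alpha})=0$ for all $j$, and $\partial_jl(\tilde{\boldsymbol\alpha})\le0$ whenever $\tilde\alpha_j=0$) and is therefore the unique maximizer of $l$ on the non-negative orthant.
   Context: $l(\boldsymbol\alpha)=\sum_{i=1}^N\big(P_i\log d_i-(\mathbf{L}\boldsymbol\alpha)_iP_i-d_i e^{-(\mathbf{L}\boldsymbol\alpha)_i}-\log(P_i!)\big)$ for $\boldsymbol\alpha\ge0$, with $\partial_j l(\boldsymbol\alpha)=\sum_i L_{i,j}\big(d_ie^{-(\mathbf{L}\boldsymbol\alpha)_i}-P_i\big)$. The map $\mathbf{T}$ is $\mathbf{T}(\boldsymbol\alpha)_j=\dfrac{(\mathbf{L}^T(\mathbf{d}\odot e^{-\mathbf{L}\boldsymbol\alpha}))_j}{(\mathbf{L}^T\mathbf{P})_j}\alpha_j$, with $\odot$ the componentwise product and the exponential taken componentwise. *)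

(* Defs.v *)
From Stdlib Require Import Reals Factorial.
Open Scope R_scope.

(* Vectors in R^n are functions nat -> R, only indices 0..n-1 matter.
   Matrix L in R^{N x M} is L : nat -> nat -> R, entry (i,j) = L i j.
   Paper index i = 1..N corresponds to Rocq index i-1. *)

Fixpoint fsum (n : nat) (f : nat -> R) : R :=
  match n with
  | O => 0
  | S k => fsum k f + f k
  end.

Definition Lmul (M : nat) (L : nat -> nat -> R) (a : nat -> R) (i : nat) : R :=
  fsum M (fun j => L i j * a j).

Definition loglik (N M : nat) (L : nat -> nat -> R) (d : nat -> R) (P : nat -> nat)
  (a : nat -> R) : R :=
  fsum N (fun i => INR (P i) * ln (d i) - Lmul M L a i * INR (P i)
                   - d i * exp (- Lmul M L a i) - ln (INR (fact (P i)))).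

Definition dl (N M : nat) (L : nat -> nat -> R) (d : nat -> R) (P : nat -> nat)
  (a : nat -> R) (j : nat) : R :=
  fsum N (fun i => L i j * (d i * exp (- Lmul M L a i) - INR (P i))).

Definition Tmap (N M : nat) (L : nat -> nat -> R) (d : nat -> R) (P : nat -> nat)
  (a : nat -> R) (j : nat) : R :=
  fsum N (fun i => L i j * (d i * exp (- Lmul M L a i)))
  / fsum N (fun i => L i j * INR (P i)) * a j.

Definition full_col_rank (N M : nat) (L : nat -> nat -> R) : Prop :=
  forall x : nat -> R,
    (forall i, (i < N)%nat -> Lmul M L x i = 0) ->
    forall j, (j < M)%nat -> x j = 0.

(* Main.v *)
Require Import Defs.
From Stdlib Require Import Reals Factorial Lra Lia.
Open Scope R_scope.

Lemma fsum_ext n f g : (forall k, (k < n)%nat -> f k = g k) -> fsum n f = fsum n g.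
Proof. induction n; simpl; intros H; [reflexivity|]. rewrite IHn, H; auto. Qed.

Lemma fsum_plus n f g : fsum n (fun k => f k + g k) = fsum n f + fsum n g.
Proof. induction n; simpl; [lra|]. rewrite IHn; lra. Qed.

Lemma fsum_minus n f g : fsum n (fun k => f k - g k) = fsum n f - fsum n g.
Proof. induction n; simpl; [lra|]. rewrite IHn; lra. Qed.

Lemma fsum_scal n c f : fsum n (fun k => c * f k) = c * fsum n f.
Proof. induction n; simpl; [lra|]. rewrite IHn; lra. Qed.

Lemma fsum_zero n : fsum n (fun _ => 0) = 0.
Proof. induction n; simpl; [lra|]. rewrite IHn; lra. Qed.

Lemma fsum_le n f g : (forall k, (k < n)%nat -> f k <= g k) -> fsum n f <= fsum n g.
Proof. induction n; simpl; intros H; [lra|]. assert (f n <= g n) by auto.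
  assert (fsum n f <= fsum n g) by auto. lra. Qed.

Lemma fsum_nonneg n f : (forall k, (k < n)%nat -> 0 <= f k) -> 0 <= fsum n f.
Proof. intros H. rewrite <- (fsum_zero n). apply fsum_le; auto. Qed.

Lemma fsum_nonpos n f : (forall k, (k < n)%nat -> f k <= 0) -> fsum n f <= 0.
Proof. intros H. rewrite <- (fsum_zero n). apply fsum_le; auto. Qed.

Lemma fsum_ge_term n f k : (forall k, (k < n)%nat -> 0 <= f k) -> (k < n)%nat -> f k <= fsum n f.
Proof. induction n; simpl; intros H Hk; [lia|].
  destruct (Nat.eq_dec k n) as [->|Hne].
  - assert (0 <= fsum n f) by (apply fsum_nonneg; auto). lra.
  - assert (f k <= fsum n f) by (apply IHn; auto; lia). assert (0 <= f n) by auto. lra. Qed.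

Lemma fsum_le_term n f k : (forall k, (k < n)%nat -> f k <= 0) -> (k < n)%nat -> fsum n f <= f k.
Proof. intros H Hk. pose proof (fsum_ge_term n (fun k => - f k) k).
  rewrite <- (Ropp_involutive (fsum n f)).
  replace (- fsum n f) with (fsum n (fun k => - f k)).
  - assert (- f k <= fsum n (fun k => - f k)) by (apply H0; auto; intros; specialize (H k0 H1); lra). lra.
  - clear. induction n; simpl; [lra|]. rewrite IHn; lra. Qed.

Lemma fsum_exch n m F : fsum n (fun i => fsum m (fun j => F i j)) = fsum m (fun j => fsum n (fun i => F i j)).
Proof. induction n; simpl. - symmetry; apply fsum_zero.
  - rewrite IHn, <- fsum_plus. reflexivity. Qed.

Lemma cv_const c : Un_cv (fun _ => c) c.
Proof. intros e He. exists O. intros. unfold Rdist. rewrite Rminus_diag, Rabs_R0. lra. Qed.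

Lemma cv_fsum n u l : (forall k, (k < n)%nat -> Un_cv (u k) (l k)) ->
  Un_cv (fun t => fsum n (fun k => u k t)) (fsum n l).
Proof. induction n; simpl; intros H. - apply cv_const.
  - apply CV_plus; auto. Qed.

Lemma cv_shift u l : Un_cv u l -> Un_cv (fun n => u (S n)) l.
Proof. intros H e He. destruct (H e He) as [N0 HN]. exists N0. intros. apply HN; lia. Qed.

Lemma cv_nonneg u l : (forall n, 0 < u n) -> Un_cv u l -> 0 <= l.
Proof. intros Hp H. destruct (Rle_or_lt 0 l) as [|Hl]; auto.
  destruct (H (-l)) as [N0 HN]; [lra|]. specialize (HN N0 (le_n _)). specialize (Hp N0).
  unfold Rdist in HN. apply Rabs_def2 in HN. lra. Qed.

Lemma cv_exp u l : Un_cv u l -> Un_cv (fun n => exp (- u n)) (exp (- l)).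
Proof. intros H. apply (continuity_seq exp (fun n => - u n)).
  - apply derivable_continuous, derivable_exp.
  - apply (CV_opp u l H). Qed.

Lemma cv_ext u v l : Un_cv u l -> (forall n, u n = v n) -> Un_cv v l.
Proof. intros H E e He. destruct (H e He) as [N0 HN]. exists N0. intros. rewrite <- E. auto. Qed.

Definition Aj N M L d (a : nat -> R) j := fsum N (fun i => L i j * (d i * exp (- Lmul M L a i))).
Definition Bj N (L : nat -> nat -> R) (P : nat -> nat) j := fsum N (fun i => L i j * INR (P i)).

Lemma dl_AB N M L d P a j : dl N M L d P a j = Aj N M L d a j - Bj N L P j.
Proof. unfold dl, Aj, Bj. rewrite <- fsum_minus. apply fsum_ext. intros; ring. Qed.

Lemma Lmul_minus M L a b i : Lmul M L (fun j => a j - b j) i = Lmul M L a i - Lmul M L b i.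
Proof. unfold Lmul. rewrite <- fsum_minus. apply fsum_ext. intros; ring. Qed.

Lemma loglik_diff N M L d P a b :
  loglik N M L d P a - loglik N M L d P b =
  fsum N (fun i => d i * exp (- Lmul M L b i) *
     (1 - (Lmul M L a i - Lmul M L b i) - exp (- (Lmul M L a i - Lmul M L b i))))
  + fsum M (fun j => (a j - b j) * dl N M L d P b j).
Proof.
  unfold loglik. rewrite <- fsum_minus.
  transitivity (fsum N (fun i => d i * exp (- Lmul M L b i) *
     (1 - (Lmul M L a i - Lmul M L b i) - exp (- (Lmul M L a i - Lmul M L b i)))
     + (d i * exp (- Lmul M L b i) - INR (P i)) * (Lmul M L a i - Lmul M L b i))).
  { apply fsum_ext. intros i _.
    replace (exp (- Lmul M L a i)) with (exp (- Lmul M L b i) * exp (- (Lmul M L a i - Lmul M L b i)))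
      by (rewrite <- exp_plus; f_equal; ring). ring. }
  rewrite fsum_plus. f_equal.
  transitivity (fsum N (fun i => fsum M (fun j => (a j - b j) * (L i j * (d i * exp (- Lmul M L b i) - INR (P i)))))).
  { apply fsum_ext. intros i _. rewrite <- Lmul_minus. unfold Lmul. rewrite <- fsum_scal.
    apply fsum_ext. intros; ring. }
  rewrite fsum_exch. apply fsum_ext. intros j _. unfold dl. rewrite <- fsum_scal. reflexivity.
Qed.

Theorem mainTheorem3 (N M : nat) (L : nat -> nat -> R) (d : nat -> R)
  (P : nat -> nat) (alpha : nat -> nat -> R) (at_ : nat -> R) :
  (M <= N)%nat ->
  (forall i, (i < N)%nat -> 0 < d i) ->
  (0 < P (N - 1))%nat ->
  full_col_rank N M L ->
  (forall i j, (i < N)%nat -> (j < M)%nat -> 0 <= L i j) ->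
  (forall j, (j < M)%nat -> 0 < L (N - 1)%nat j) ->
  (forall j, (j < M)%nat -> 0 < alpha O j) ->
  (forall n j, (j < M)%nat -> alpha (S n) j = Tmap N M L d P (alpha n) j) ->
  (forall j, (j < M)%nat -> Un_cv (fun n => alpha n j) (at_ j)) ->
  (* KKT conditions *)
  (forall j, (j < M)%nat -> at_ j * dl N M L d P at_ j = 0) /\
  (forall j, (j < M)%nat -> at_ j = 0 -> dl N M L d P at_ j <= 0) /\
  (* unique maximizer of l on the non-negative orthant *)
  (forall j, (j < M)%nat -> 0 <= at_ j) /\
  (forall a : nat -> R, (forall j, (j < M)%nat -> 0 <= a j) ->
     loglik N M L d P a <= loglik N M L d P at_) /\
  (forall a : nat -> R, (forall j, (j < M)%nat -> 0 <= a j) ->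
     loglik N M L d P a = loglik N M L d P at_ ->
     forall j, (j < M)%nat -> a j = at_ j).
Proof.
  intros HMN Hd HP Hrank HL HLN H0 Hrec Hcv.
  assert (HB : forall j, (j < M)%nat -> 0 < Bj N L P j).
  { intros j Hj. unfold Bj.
    apply Rlt_le_trans with (L (N-1)%nat j * INR (P (N-1)%nat)).
    - apply Rmult_lt_0_compat; auto. apply lt_0_INR; auto.
    - apply (fsum_ge_term N (fun i => L i j * INR (P i))); [|lia].
      intros; apply Rmult_le_pos; auto; apply pos_INR. }
  assert (HA : forall a j, (j < M)%nat -> 0 < Aj N M L d a j).
  { intros a j Hj. unfold Aj.
    apply Rlt_le_trans with (L (N-1)%nat j * (d (N-1)%nat * exp (- Lmul M L a (N-1)%nat))).
    - apply Rmult_lt_0_compat; auto. apply Rmult_lt_0_compat; [apply Hd; lia|apply exp_pos].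
    - apply (fsum_ge_term N (fun i => L i j * (d i * exp (- Lmul M L a i)))); [|lia].
      intros; apply Rmult_le_pos; auto. apply Rmult_le_pos; [apply Rlt_le, Hd; auto|apply Rlt_le, exp_pos]. }
  assert (HT : forall n j, (j < M)%nat -> alpha (S n) j = Aj N M L d (alpha n) j / Bj N L P j * alpha n j).
  { intros n j Hj. rewrite Hrec; auto. }
  assert (Hpos : forall n j, (j < M)%nat -> 0 < alpha n j).
  { induction n; intros j Hj; auto. rewrite HT; auto.
    apply Rmult_lt_0_compat; auto. apply Rdiv_lt_0_compat; auto. }
  assert (Hnn : forall j, (j < M)%nat -> 0 <= at_ j).
  { intros j Hj. apply (cv_nonneg (fun n => alpha n j)); auto. }
  assert (HcvA : forall j, (j < M)%nat -> Un_cv (fun n => Aj N M L d (alpha n) j) (Aj N M L d at_ j)).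
  { intros j Hj. unfold Aj.
    apply (cv_fsum N (fun i n => L i j * (d i * exp (- Lmul M L (alpha n) i)))).
    intros i Hi. apply CV_mult; [apply cv_const|]. apply CV_mult; [apply cv_const|].
    apply cv_exp. unfold Lmul.
    apply (cv_fsum M (fun k n => L i k * alpha n k)).
    intros k Hk. apply CV_mult; [apply cv_const|]. auto. }
  assert (Hfix : forall j, (j < M)%nat -> at_ j = Aj N M L d at_ j / Bj N L P j * at_ j).
  { intros j Hj. apply (UL_sequence (fun n => alpha (S n) j)).
    - apply (cv_shift (fun n => alpha n j)); auto.
    - eapply cv_ext.
      + unfold Rdiv. apply CV_mult; [apply CV_mult; [apply HcvA; auto|apply cv_const]|apply Hcv; auto].
      + intros n. rewrite HT; auto. }
  assert (K1 : forall j, (j < M)%nat -> at_ j * dl N M L d P at_ j = 0).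
  { intros j Hj. rewrite dl_AB. specialize (Hfix j Hj). specialize (HB j Hj).
    set (r := Aj N M L d at_ j / Bj N L P j) in *.
    assert (Aj N M L d at_ j = r * Bj N L P j) by (unfold r; field; lra).
    rewrite H. replace (at_ j * (r * Bj N L P j - Bj N L P j)) with (Bj N L P j * (r * at_ j - at_ j)) by ring.
    rewrite <- Hfix. ring. }
  assert (K2 : forall j, (j < M)%nat -> at_ j = 0 -> dl N M L d P at_ j <= 0).
  { intros j Hj Hz. rewrite dl_AB. apply Rnot_lt_le. intros Hc.
    destruct (HcvA j Hj (Aj N M L d at_ j - Bj N L P j)) as [N0 HN0]; [lra|].
    assert (Hinc : forall n, (n >= N0)%nat -> alpha n j < alpha (S n) j).
    { intros n Hn. specialize (HN0 n Hn). unfold Rdist in HN0. apply Rabs_def2 in HN0.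
      rewrite HT; auto. specialize (HB j Hj). specialize (Hpos n j Hj).
      assert (1 < Aj N M L d (alpha n) j / Bj N L P j).
      { apply (Rmult_lt_reg_r (Bj N L P j)); auto. unfold Rdiv.
        rewrite Rmult_assoc, Rinv_l; lra. }
      nra. }
    assert (Hmono : forall k, alpha N0 j <= alpha (N0 + k)%nat j).
    { induction k. - rewrite Nat.add_0_r; lra.
      - rewrite Nat.add_succ_r. specialize (Hinc (N0 + k)%nat ltac:(lia)). lra. }
    destruct (Hcv j Hj (alpha N0 j)) as [N1 HN1]; [apply Hpos; auto|].
    specialize (HN1 (N0 + N1)%nat ltac:(lia)). specialize (Hmono N1).
    unfold Rdist in HN1. rewrite Hz in HN1. apply Rabs_def2 in HN1. lra. }
  assert (Hsum : forall a : nat -> R, (forall j, (j < M)%nat -> 0 <= a j) ->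
     fsum M (fun j => (a j - at_ j) * dl N M L d P at_ j) <= 0).
  { intros a Ha. apply fsum_nonpos. intros j Hj.
    destruct (Req_dec (at_ j) 0) as [Hz|Hz].
    - rewrite Hz. specialize (K2 j Hj Hz). specialize (Ha j Hj). nra.
    - specialize (K1 j Hj). apply Rmult_integral in K1. destruct K1 as [|K1]; [contradiction|].
      rewrite K1. lra. }
  assert (HE : forall a i, (i < N)%nat -> d i * exp (- Lmul M L at_ i) *
     (1 - (Lmul M L a i - Lmul M L at_ i) - exp (- (Lmul M L a i - Lmul M L at_ i))) <= 0).
  { intros a i Hi.
    assert (0 < d i * exp (- Lmul M L at_ i)) by (apply Rmult_lt_0_compat; auto; apply exp_pos).
    pose proof (exp_ineq1_le (- (Lmul M L a i - Lmul M L at_ i))). nra. }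
  split; [exact K1|]. split; [exact K2|]. split; [exact Hnn|]. split.
  - intros a Ha. pose proof (loglik_diff N M L d P a at_). pose proof (Hsum a Ha).
    assert (fsum N (fun i => d i * exp (- Lmul M L at_ i) *
     (1 - (Lmul M L a i - Lmul M L at_ i) - exp (- (Lmul M L a i - Lmul M L at_ i)))) <= 0)
      by (apply fsum_nonpos; intros; apply HE; auto).
    lra.
  - intros a Ha Heq. pose proof (loglik_diff N M L d P a at_). pose proof (Hsum a Ha).
    assert (fsum N (fun i => d i * exp (- Lmul M L at_ i) *
     (1 - (Lmul M L a i - Lmul M L at_ i) - exp (- (Lmul M L a i - Lmul M L at_ i)))) <= 0)
      by (apply fsum_nonpos; intros; apply HE; auto).
    assert (Hv : forall i, (i < N)%nat -> Lmul M L a i - Lmul M L at_ i = 0).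
    { intros i Hi. destruct (Req_dec (Lmul M L a i - Lmul M L at_ i) 0) as [|Hne]; auto.
      exfalso. pose proof (fsum_le_term N (fun i => d i * exp (- Lmul M L at_ i) *
        (1 - (Lmul M L a i - Lmul M L at_ i) - exp (- (Lmul M L a i - Lmul M L at_ i)))) i
        (fun k Hk => HE a k Hk) Hi) as Hle. simpl in Hle.
      assert (d i * exp (- Lmul M L at_ i) *
        (1 - (Lmul M L a i - Lmul M L at_ i) - exp (- (Lmul M L a i - Lmul M L at_ i))) < 0).
      { assert (0 < d i * exp (- Lmul M L at_ i)) by (apply Rmult_lt_0_compat; auto; apply exp_pos).
        assert (- (Lmul M L a i - Lmul M L at_ i) <> 0) by lra.
        pose proof (exp_ineq1 _ H4). nra. }
      lra. }
    intros j Hj. assert (a j - at_ j = 0); [|lra].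
    apply (Hrank (fun j => a j - at_ j)); auto.
    intros i Hi. rewrite Lmul_minus. auto.
Qed.
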